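(* Let $\epsilon>0$ and let $\theta\in\Theta_1\cap\mathbb{V}$ be locally optimal, i.e. $\theta=\operatorname{argsup}_{v\in\Theta\cap\mathbb{V}_{D(\theta)}}L(v)$. If $\sup_{\tau\ge0}DL(\theta,V_\tau)<\epsilon$, then \[L(\hat\theta)-L(\theta)\le\hat\theta'(x_n)\,\epsilon<\beta\epsilon.\]
   Context: Let $f$ be a probability density on $\mathbb{R}_{\ge0}$ satisfying the standing assumptions: (A1) $f$ is continuous and $f(x)>0$ for all $x>0$; (A2) there is $\beta\in\mathbb{R}$ such that for every $\lambda\in\mathbb{R}$, $\int_0^\infty e^{\lambda x}f(x)\,dx<\infty$ if and only if $\lambda<\beta$, and $\lim_{\lambda\to\beta^-}\int_0^\infty e^{\lambda x}f(x)\,dx=\infty$; (A3) for every $\lambda\in\mathbb{R}$, $\int_0^\infty e^{\lambda x}f(x)dx<\infty$ implies $\int_0^\infty x^2e^{\lambda x}f(x)dx<\infty$. Let $M$ be the measure on $\mathbb{R}_{\ge0}$ with density $f$. Fix data $x_1\le\dots\le x_n$ in $\mathbb{R}_{\ge0}$ with empirical distribution $\hat P=\frac1n\sum_{i=1}^n\delta_{x_i}$. $\Theta$ is the set of convex non-decreasing functions $\theta:\mathbb{R}_{\ge0}\to\mathbb{R}$, and $\Theta_1=\{\theta\in\Theta:\int e^{\theta}dM=1\}$. For $\theta\in\Theta$, $L(\theta):=\int\theta\,d\hat P-\int e^{\theta}\,dM+1\in[-\infty,\infty)$. For $\theta\in\Theta$ and a function $v$, $DL(\theta,v):=\lim_{t\to0^+}\frac{L(\theta+tv)-L(\theta)}{t}$.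 $\mathbb{V}$ is the set of continuous piecewise linear functions $v:\mathbb{R}_{\ge0}\to\mathbb{R}$ with finitely many breakpoints; $D(v)=\{\tau\ge0: v'(\tau-)\neq v'(\tau+)\}$ is its set of breakpoints; for finite $S\subset\mathbb{R}_{\ge0}$, $\mathbb{V}_S=\{v\in\mathbb{V}:D(v)\subseteq S\}$. For $\tau\ge0$, $V_\tau(x):=(x-\tau)^+$. It is known (Dümbgen) that $L$ has a unique maximizer $\hat\theta$ over $\Theta$; it belongs to $\Theta_1\cap\mathbb{V}$ and its breakpoints lie in $(\{0\}\cup[x_1,x_n])\setminus\{x_1,\dots,x_n\}$, so in particular $\hat\theta$ is differentiable at $x_n$. *)

(* Defs.v *)
From HB Require Import structures.
From mathcomp Require Import all_boot all_order all_algebra.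
From mathcomp Require Import all_classical all_reals all_analysis.
Set Implicit Arguments. Unset Strict Implicit. Unset Printing Implicit Defensive.
Import Order.TTheory GRing.Theory Num.Theory.
Import numFieldNormedType.Exports.
Local Open Scope classical_set_scope.
Local Open Scope ring_scope.

Section Defs.
Variable R : realType.
Local Notation mu := (@lebesgue_measure R).

Definition Rplus : set R := `[0, +oo[%classic.

(* integral against M (density f) of a nonnegative function g, on [0,oo) *)
Definition intM (f g : R -> R) : \bar R :=
  (\int[mu]_(x in Rplus) (g x * f x)%:E)%E.

Definition finM (f g : R -> R) : Prop := (intM f g < +oo)%E.

(* Standing assumptions (A1)-(A3) on f, plus f being a probability density. *)
Definition density_assumptions (f : R -> R) (beta : R) : Prop :=
  {within Rplus, continuous f} /\
  (forall x, 0 < x -> 0 < f x) /\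
  intM f (fun _ => 1) = 1%:E /\
  (forall l : R, finM f (fun x => expR (l * x)) <-> l < beta) /\
  ((fun l => intM f (fun x => expR (l * x))) @ beta^'- --> +oo%E) /\
  (forall l : R, finM f (fun x => expR (l * x)) ->
                 finM f (fun x => x ^+ 2 * expR (l * x))).

Definition inTheta (th : R -> R) : Prop :=
  (forall x y, 0 <= x -> x <= y -> th x <= th y) /\
  (forall x y (l : R), 0 <= x -> 0 <= y -> 0 <= l -> l <= 1 ->
     th (l * x + (1 - l) * y) <= l * th x + (1 - l) * th y).

Definition inTheta1 (f th : R -> R) : Prop :=
  inTheta th /\ intM f (fun x => expR (th x)) = 1%:E.

Definition Lik (f : R -> R) (xs : seq R) (th : R -> R) : \bar R :=
  ((((\sum_(x <- xs) th x) / (size xs)%:R)%R)%:E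
     - intM f (fun x => expR (th x)) + 1)%E.

Definition DL (f : R -> R) (xs : seq R) (th v : R -> R) : \bar R :=
  lim ((fun t : R => ((Lik f xs (fun x => (th x + t * v x)%R) - Lik f xs th)
                        * (t^-1)%R%:E)%E) @ 0^'+).

Definition rderiv (v : R -> R) (x : R) : R :=
  lim ((fun h : R => (v (x + h) - v x) / h) @ 0^'+).
(* left derivative; on R_{>=0} we use the convention v'(0-) = 0
   (functions are thought of as extended by a constant to the left of 0,
    so that e.g. V_0(x) = x has a breakpoint at 0). *)
Definition lderiv (v : R -> R) (x : R) : R :=
  if x == 0 then 0 else lim ((fun h : R => (v x - v (x - h)) / h) @ 0^'+).

(* V: continuous piecewise linear functions on R_{>=0} with finitely many
   breakpoints: there is a finite list s of points such that v is affine on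
   every interval [a,b] of R_{>=0} whose interior avoids s. *)
Definition inV (v : R -> R) : Prop :=
  {within Rplus, continuous v} /\
  exists s : seq R, forall a b, 0 <= a -> a < b ->
    (forall t, t \in s -> ~ (a < t < b)) ->
    forall x, a <= x -> x <= b ->
      v x = v a + (x - a) / (b - a) * (v b - v a).

Definition Dbr (v : R -> R) : set R :=
  [set tau | 0 <= tau /\ lderiv v tau != rderiv v tau].

Definition inVS (S : set R) (v : R -> R) : Prop := inV v /\ Dbr v `<=` S.

Definition Vtau (tau : R) : R -> R := fun x => Num.max (x - tau) 0.

Definition locally_optimal (f : R -> R) (xs : seq R) (th : R -> R) : Prop :=
  inTheta th /\ inVS (Dbr th) th /\
  forall v, inTheta v -> inVS (Dbr th) v -> (Lik f xs v <= Lik f xs th)%E.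

End Defs.

(* Main.v *)
Require Import Defs.
From HB Require Import structures.
From mathcomp Require Import all_boot all_order all_algebra.
From mathcomp Require Import all_classical all_reals all_analysis.
From mathcomp Require Import ring lra.
Import Order.TTheory GRing.Theory Num.Theory.
Import numFieldNormedType.Exports.
Local Open Scope classical_set_scope.
Local Open Scope ring_scope.

Set Implicit Arguments. Unset Strict Implicit. Unset Printing Implicit Defensive.

Ltac fsc := repeat (apply/andP; split); apply/eqP; lra.

Section P1.
Variable R : realType.
Implicit Types (v w : R -> R) (l : seq R).

Definition aff (a b : R) v := forall x, a <= x -> x <= b ->
  v x = v a + (x - a) / (b - a) * (v b - v a).

Definition PL l v := forall a b, 0 <= a -> a < b ->
  (forall t, t \in l -> ~ (a < t < b)) -> aff a b v.

Lemma rderiv_loc v x (d s : R) : 0 < d ->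
  (forall h, 0 < h -> h <= d -> v (x + h) = v x + h * s) -> rderiv v x = s.
Proof.
move=> d0 H; rewrite /rderiv; apply: cvg_lim => //.
apply: cvg_near_cst; near=> h.
have h0 : 0 < h by near: h; exact: nbhs_right_gt.
have hd : h <= d by near: h; exact: nbhs_right_le.
rewrite H // addrAC subrr add0r mulrC mulKf //; exact: lt0r_neq0.
Unshelve. all: end_near. Qed.

Lemma lderiv_loc v x (d s : R) : x != 0 -> 0 < d ->
  (forall h, 0 < h -> h <= d -> v (x - h) = v x - h * s) -> lderiv v x = s.
Proof.
move=> x0 d0 H; rewrite /lderiv (negbTE x0); apply: cvg_lim => //.
apply: cvg_near_cst; near=> h.
have h0 : 0 < h by near: h; exact: nbhs_right_gt.
have hd : h <= d by near: h; exact: nbhs_right_le.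
rewrite H // opprB addrC subrK mulrC mulKf //; exact: lt0r_neq0.
Unshelve. all: end_near. Qed.

Lemma rderiv_aff v x d : 0 < d -> aff x (x + d) v ->
  rderiv v x = (v (x + d) - v x) / d.
Proof.
move=> d0 H; apply: (@rderiv_loc v x d _ d0) => h h0 hd.
rewrite H; [|lra|lra].
have -> : x + h - x = h by ring.
have -> : x + d - x = d by ring.
rewrite mulrAC; congr (_ + _); rewrite mulrC mulrA; ring.
Qed.

Lemma lderiv_aff v x d : x != 0 -> 0 < d -> aff (x - d) x v ->
  lderiv v x = (v x - v (x - d)) / d.
Proof.
move=> x0 d0 H; apply: (@lderiv_loc v x d _ x0 d0) => h h0 hd.
have E1 := H x. have E2 := H (x - h).
rewrite E2; [|lra|lra].
have -> : x - (x - d) = d by ring.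
rewrite {1}E1; [|lra|lra].
have -> : x - (x - d) = d by ring.
have -> : x - h - (x - d) = d - h by ring.
rewrite divff ?lt0r_neq0 // mul1r.
field; exact: lt0r_neq0.
Qed.


Lemma loc_delta l x : 0 <= x -> exists d, [/\ 0 < d, (0 < x -> d <= x) &
  forall t, t \in l -> t != x -> t <= x - d \/ x + d <= t].
Proof.
move=> x0; elim: l => [|t l [d [d0 dx H]]].
  case: (ltP 0 x) => hx.
    by exists x; split => //; try (move=> t; rewrite in_nil).
  by exists 1; split => //; try (by move=> h; lra); try (by move=> t; rewrite in_nil).
case: (eqVneq t x) => [->|tx].
  exists d; split => // t'; rewrite in_cons => /orP[/eqP ->|/H //]; by rewrite eqxx.
pose e := if t < x then x - t else t - x.
have e0 : 0 < e.
  rewrite /e; case: ifP => ht; first lra.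
  move/negbT: ht; rewrite -leNgt => ht.
  have : t != x := tx. rewrite neq_lt => /orP[] h; lra.
have et : t <= x - e \/ x + e <= t.
  rewrite /e; case: ifP => ht; [left; lra| right; lra].
exists (Num.min d e); split.
- by rewrite lt_min d0 e0.
- move=> /dx h; rewrite ge_min h //.
- move=> t'; rewrite in_cons => /orP[/eqP -> _|/H h /h].
    have h1 : Num.min d e <= e by rewrite ge_min lexx orbT.
    case: et => ?; lra.
  have h1 : Num.min d e <= d by rewrite ge_min lexx.
  case => ?; lra.
Qed.

Lemma PL_loc l v x d : PL l v -> 0 <= x -> 0 < d -> (0 < x -> d <= x) ->
  (forall t, t \in l -> t != x -> t <= x - d \/ x + d <= t) ->
  aff x (x + d) v /\ (0 < x -> aff (x - d) x v).
Proof.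
move=> hv x0 d0 dx H; split.
  apply: hv => //; first lra.
  move=> t tl; case: (eqVneq t x) => [->|tx]; first lra.
  case: (H t tl tx) => ?; lra.
move=> xp; have h := dx xp; apply: hv; [lra|lra|].
move=> t tl; case: (eqVneq t x) => [->|tx]; first lra.
case: (H t tl tx) => ?; lra.
Qed.

Lemma Vtau0 (p y : R) : y <= p -> Vtau p y = 0.
Proof. by move=> h; rewrite /Vtau max_r // subr_le0. Qed.

Lemma Vtau1 (p y : R) : p <= y -> Vtau p y = y - p.
Proof. by move=> h; rewrite /Vtau max_l // subr_ge0. Qed.

Lemma Vtau_ge0 (p y : R) : 0 <= Vtau p y.
Proof. by rewrite /Vtau le_max lexx orbT. Qed.

Lemma aff_V (p a b : R) : a < b -> (p <= a \/ b <= p) -> aff a b (Vtau p).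
Proof.
move=> ab hp x ax xb.
case: hp => hp.
  rewrite !Vtau1; [|lra|lra|lra].
  have -> : b - p - (a - p) = b - a by ring.
  rewrite divfK; [ring|]. by rewrite subr_eq0 gt_eqF.
rewrite !Vtau0; [|lra|lra|lra].
by rewrite subrr mulr0 addr0.
Qed.

Lemma aff_lin a b v w (al be ga : R) : aff a b v -> aff a b w ->
  aff a b (fun x => al * v x + be * w x + ga).
Proof.
move=> hv hw x ax xb; rewrite (hv x ax xb) (hw x ax xb); ring.
Qed.


Definition J v q := rderiv v q - lderiv v q.

Lemma lderiv0 v : lderiv v 0 = 0.
Proof. by rewrite /lderiv eqxx. Qed.

Lemma PL_filter l v : PL l v -> PL [seq t <- undup l | 0 < t] v.
Proof.
move=> hv a b a0 ab hl; apply: hv => // t tl h.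
apply: (hl t) => //; rewrite mem_filter mem_undup tl andbT.
case/andP: h => h1 _; lra.
Qed.

Lemma decomp l : uniq l -> all (fun t => 0 < t) l -> forall v, PL l v ->
  forall x, 0 <= x -> v x = v 0 + \sum_(q <- 0 :: l) J v q * Vtau q x.
Proof.
elim: l => [_ _ v hv x x0 | p l IH].
  rewrite big_cons big_nil addr0 /J lderiv0 subr0.
  case: (eqVneq x 0) => [->|xn0]; first by rewrite Vtau0 // mulr0 addr0.
  have xp : 0 < x by rewrite lt_def xn0.
  have ha : aff 0 (0 + x) v.
    by rewrite add0r; apply: hv => //; move=> t; rewrite in_nil.
  rewrite (rderiv_aff xp ha) add0r Vtau1 // subr0 divfK ?gt_eqF //; ring.
move=> /= /andP[pl ul] /andP[p0 al] v hv x x0.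
set c := J v p.
pose w := fun y => v y - c * Vtau p y.
have hw : PL l w.
  move=> a b a0 ab hl.
  case: (boolP (a < p < b)) => hp.
    case/andP: hp => ap pb.
    have hl1 : aff a p v.
      apply: hv => //; move=> t; rewrite in_cons => /orP[/eqP->|tl]; first lra.
      move=> h; apply: (hl t tl); lra.
    have hl2 : aff p b v.
      apply: hv => //; [lra|]; move=> t; rewrite in_cons => /orP[/eqP->|tl]; first lra.
      move=> h; apply: (hl t tl); lra.
    have Ll : lderiv v p = (v p - v a) / (p - a).
      have hh : aff (p - (p - a)) p v by rewrite (_ : p - (p - a) = a) //; ring.
      rewrite (lderiv_aff (lt0r_neq0 p0) _ hh); [|lra].
      by rewrite (_ : p - (p - a) = a) //; ring.
    have Rr : rderiv v p = (v b - v p) / (b - p).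
      have hh : aff p (p + (b - p)) v by rewrite (_ : p + (b - p) = b) //; ring.
      rewrite (rderiv_aff _ hh); [|lra].
      by rewrite (_ : p + (b - p) = b) //; ring.
    have key : forall y, a <= y -> y <= b -> w y = v p + (y - p) * ((v p - v a) / (p - a)).
      move=> y ay yb; rewrite /w /c /J Ll Rr.
      case: (lerP y p) => yp.
        rewrite Vtau0 // mulr0 subr0 (hl1 y ay yp).
        field; fsc.
      rewrite Vtau1 ?(ltW yp) // (hl2 y (ltW yp) yb).
      field; fsc.
    move=> y ay yb; rewrite !key //; [|lra|lra].
    field; fsc.
  have hv' : aff a b v.
    apply: hv => //; move=> t; rewrite in_cons => /orP[/eqP->|tl]; last exact: hl.
    exact/negP.
  have hV : aff a b (Vtau p).
    apply: aff_V => //; move: hp; rewrite negb_and -!leNgt => /orP[]; by [left|right].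
  move=> y ay yb; rewrite /w (hv' y ay yb) (hV y ay yb); ring.
have hJ : forall q, q \in 0 :: l -> J w q = J v q.
  move=> q; rewrite in_cons => hq.
  have q0 : 0 <= q.
    case/orP: hq => [/eqP->//|ql]; exact: ltW (allP al q ql).
  have qp : p != q.
    case/orP: hq => [/eqP->|ql]; first by rewrite gt_eqF.
    by apply/eqP => e; move: pl; rewrite e ql.
  have [d [d0 dq H]] := loc_delta (p :: l) q0.
  have [hr hl'] := PL_loc hv q0 d0 dq H.
  have hp := H p (mem_head _ _) qp.
  have hVr : aff q (q + d) (Vtau p).
    by apply: aff_V; [lra|case: hp => ?; [left|right]; lra].
  have hwr : aff q (q + d) w.
    move=> y h1 h2; rewrite /w (hr y h1 h2) (hVr y h1 h2); ring.
  rewrite /J (rderiv_aff d0 hwr) (rderiv_aff d0 hr).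
  case: (eqVneq q 0) => [qe|qn0].
    have dp : d <= p by rewrite qe in hp; case: hp => ?; lra.
    rewrite qe !lderiv0 /w !Vtau0; [|lra|lra].
    ring.
  have qpos : 0 < q by rewrite lt_def qn0.
  have hVl : aff (q - d) q (Vtau p).
    by apply: aff_V; [lra|case: hp => ?; [left|right]; lra].
  have hwl : aff (q - d) q w.
    move=> y h1 h2; rewrite /w (hl' qpos y h1 h2) (hVl y h1 h2); ring.
  rewrite (lderiv_aff qn0 d0 hwl) (lderiv_aff qn0 d0 (hl' qpos)).
  rewrite /w; case: hp => hp.
    rewrite !Vtau1; [|lra|lra|lra].
    field; fsc.
  rewrite !Vtau0; [|lra|lra|lra].
  field; fsc.
have E := IH ul al w hw x x0.
have Es : \sum_(q <- 0 :: l) J w q * Vtau q x = \sum_(q <- 0 :: l) J v q * Vtau q x.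
  by apply: eq_big_seq => q hq; rewrite hJ.
rewrite Es in E.
have w0 : w 0 = v 0 by rewrite /w Vtau0 ?mulr0 ?subr0 // ltW.
have -> : v x = w x + c * Vtau p x by rewrite /w subrK.
rewrite E w0 !big_cons /c; ring.
Qed.

Lemma rderiv_sum l v x : uniq l -> all (fun t => 0 < t) l -> PL l v -> 0 <= x ->
  rderiv v x = \sum_(q <- 0 :: l | q <= x) J v q.
Proof.
move=> ul al hv x0.
have [d [d0 dx H]] := loc_delta l x0.
have [hr _] := PL_loc hv x0 d0 dx H.
rewrite (rderiv_aff d0 hr) (decomp ul al hv (_ : 0 <= x + d)); last lra.
rewrite (decomp ul al hv x0).
have -> : forall a b c : R, a + b - (a + c) = b - c by move=> *; ring.
rewrite -sumrB mulr_suml [RHS]big_mkcond /=.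
apply: eq_big_seq => q hq.
case: ifP => hqx.
  rewrite !Vtau1; [|lra|lra].
  field; fsc.
have ql : q \in l.
  move: hq; rewrite in_cons => /orP[/eqP e|//].
  by move: hqx; rewrite e x0.
have qx : q != x by apply/eqP => e; move: hqx; rewrite e lexx.
move/negbT: hqx; rewrite -ltNge => hqx.
case: (H q ql qx) => ?; first lra.
rewrite !Vtau0; [|lra|lra].
by rewrite !mulr0 subrr mul0r.
Qed.

End P1.

Section P2.
Variable R : realType.
Local Notation mu := (@lebesgue_measure R).
Local Notation Rp := (@Rplus R).
Implicit Types (h g : R -> R).

Lemma RpE (x : R) : Rp x = (0 <= x).
Proof. by rewrite /Rplus /= in_itv /= andbT. Qed.

Lemma mRp : measurable Rp.
Proof. exact: measurable_itv. Qed.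

Definition mR h := measurable_fun Rp h.

Lemma mcont h : {within Rp, continuous h} -> mR h.
Proof. by move=> hc; exact: (measurable_realfun.subspace_continuous_measurable_fun mRp hc). Qed.

Lemma mD h g : mR h -> mR g -> mR (fun x => h x + g x).
Proof. exact: measurable_realfun.measurable_funD. Qed.
Lemma mM h g : mR h -> mR g -> mR (fun x => h x * g x).
Proof. exact: measurable_realfun.measurable_funM. Qed.
Lemma mB h g : mR h -> mR g -> mR (fun x => h x - g x).
Proof. exact: measurable_realfun.measurable_funB. Qed.
Lemma mN h : mR h -> mR (fun x => - h x).
Proof. exact: measurable_realfun.measurable_funN. Qed.
Lemma mC (c : R) : mR (fun _ => c).
Proof. exact: measurable_cst. Qed.
Lemma mI : mR (fun x => x).
Proof. exact: measurable_id. Qed.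
Lemma mE h : mR h -> mR (fun x => expR (h x)).
Proof. by move=> mh; exact: (measurableT_comp (@measurable_realfun.measurable_expR R) mh). Qed.
Lemma mV (p : R) : mR (Vtau p).
Proof.
rewrite /Vtau; apply: (@measurable_realfun.measurable_maxr _ _ _ Rp (fun x => x - p) (fun _ => 0)).
  exact: (mB mI (mC p)).
exact: mC.
Qed.

Definition Int h := (\int[mu]_(x in Rp) (h x)%:E)%E.

Lemma Int_ext h g : (forall x, 0 <= x -> h x = g x) -> Int h = Int g.
Proof.
move=> H; apply: eq_integral => x; rewrite inE /= => hx.
by rewrite H // -RpE.
Qed.

Lemma Int_ge0 h : (forall x, 0 <= x -> 0 <= h x) -> (0 <= Int h)%E.
Proof.
move=> H; apply: integral_ge0 => x hx; rewrite lee_fin H // -RpE //.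
Qed.

Lemma Int_le h g : mR h -> mR g -> (forall x, 0 <= x -> 0 <= h x) ->
  (forall x, 0 <= x -> h x <= g x) -> (Int h <= Int g)%E.
Proof.
move=> mh mg h0 hg; apply: ge0_le_integral => //.
- exact: mRp.
- by move=> x hx; rewrite lee_fin h0 // -RpE.
- exact/measurable_realfun.measurable_EFinP.
- exact/measurable_realfun.measurable_EFinP.
- by move=> x hx; rewrite lee_fin hg // -RpE.
Qed.

Lemma Int_D h g : mR h -> mR g -> (forall x, 0 <= x -> 0 <= h x) ->
  (forall x, 0 <= x -> 0 <= g x) ->
  Int (fun x => h x + g x) = (Int h + Int g)%E.
Proof.
move=> mh mg h0 g0; rewrite /Int.
rewrite (_ : (\int[mu]_(x in Rp) (h x + g x)%:E)%E = (\int[mu]_(x in Rp) ((h x)%:E + (g x)%:E))%E); last first.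
  by apply: eq_integral => x _; rewrite EFinD.
apply: ge0_integralD.
- exact: mRp.
- by move=> x hx; rewrite lee_fin h0 // -RpE.
- exact/measurable_realfun.measurable_EFinP.
- by move=> x hx; rewrite lee_fin g0 // -RpE.
- exact/measurable_realfun.measurable_EFinP.
Qed.

Lemma Int_Z (k : R) h : 0 <= k -> mR h -> (forall x, 0 <= x -> 0 <= h x) ->
  Int (fun x => k * h x) = (k%:E * Int h)%E.
Proof.
move=> k0 mh h0; rewrite /Int -ge0_integralZl_EFin //.
- exact: mRp.
- by move=> x hx; rewrite lee_fin h0 // -RpE.
- exact/measurable_realfun.measurable_EFinP.
Qed.

Lemma Int_sum (I : Type) (s : seq I) (F : I -> R -> R) :
  (forall i, mR (F i)) -> (forall i x, 0 <= x -> 0 <= F i x) ->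
  Int (fun x => \sum_(i <- s) F i x) = (\sum_(i <- s) Int (F i))%E.
Proof.
move=> mF F0; rewrite /Int.
rewrite (_ : (\int[mu]_(x in Rp) (\sum_(i <- s) F i x)%:E)%E = (\int[mu]_(x in Rp) (\sum_(i <- s) (F i x)%:E))%E); last first.
  by apply: eq_integral => x _; rewrite sumEFin.
apply: ge0_integral_sum.
- exact: mRp.
- by move=> i; apply/measurable_realfun.measurable_EFinP; exact: mF.
- by move=> i x hx; rewrite lee_fin F0 // -RpE.
Qed.

End P2.

Ltac mt := repeat first [ assumption | apply: mC | apply: mI | apply: mV
  | apply: mE | apply: mB | apply: mD | apply: mM | apply: mN ].

Definition Fin (R : realType) (e : \bar R) := (e < +oo)%E.

Section P3.
Variable R : realType.
Local Notation Rp := (@Rplus R).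
Implicit Types (h g : R -> R).
Variables (f : R -> R) (beta : R).
Hypothesis Hd : density_assumptions f beta.

Lemma mf : mR f.
Proof. by case: Hd => hc _; exact: mcont. Qed.

Lemma f_ge0 x : 0 <= x -> 0 <= f x.
Proof.
case: Hd => hc [hpos _] x0.
case: (eqVneq x 0) => [->|xn]; last by apply: ltW; apply: hpos; rewrite lt_def xn.
have [_ hl] := (continuous_within_itvcyP 0 f).1 hc.
have <- : lim (f y @[y --> (0:R)^'+]) = f 0 by exact: cvg_lim.
apply: limr_ge; first by apply/cvg_ex; exists (f 0).
near=> y; apply/ltW/hpos.
near: y; exact: nbhs_right_gt.
Unshelve. all: end_near. Qed.

Lemma Int_f : Int f = 1%:E.
Proof.
case: Hd => _ [_ [h1 _]]; rewrite -h1 /intM.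
by apply: Int_ext => x _; rewrite mul1r.
Qed.

Lemma A2 l : l < beta -> Fin (Int (fun x => expR (l * x) * f x)).
Proof. by case: Hd => _ [_ [_ [h2 _]]] lb; apply/h2. Qed.

Lemma A2c l : Fin (Int (fun x => expR (l * x) * f x)) -> l < beta.
Proof. by case: Hd => _ [_ [_ [h2 _]]] lb; apply/h2. Qed.

Lemma A3 l : l < beta -> Fin (Int (fun x => x ^+ 2 * expR (l * x) * f x)).
Proof.
case: Hd => _ [_ [_ [h2 [_ h3]]]] lb.
by have := h3 l (A2 lb).
Qed.

Lemma mX2 : mR (fun x : R => x ^+ 2).
Proof. by apply: measurable_realfun.measurable_funX; exact: mI. Qed.

Lemma fin_bound h (K l : R) : mR h -> 0 <= K -> l < beta ->
  (forall x, 0 <= x -> 0 <= h x <= K * ((1 + x ^+ 2) * expR (l * x))) ->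
  Fin (Int (fun x => h x * f x)).
Proof.
move=> mh K0 lb H.
have mf' := mf.
have mX := mX2.
apply: (@le_lt_trans _ _ (Int (fun x => K * (expR (l * x) * f x + x ^+ 2 * expR (l * x) * f x)))).
  apply: Int_le; [by mt|by mt| |].
    by move=> x x0; case/andP: (H x x0) => h0 _; rewrite mulr_ge0 // f_ge0.
  move=> x x0; case/andP: (H x x0) => _ h1.
  have -> : K * (expR (l * x) * f x + x ^+ 2 * expR (l * x) * f x) =
     K * ((1 + x ^+ 2) * expR (l * x)) * f x by ring.
  by rewrite ler_wpM2r // f_ge0.
have fx0 := f_ge0.
rewrite Int_Z //; last 2 first.
- by mt.
- by move=> x x0; rewrite addr_ge0 // ?mulr_ge0 ?expR_ge0 ?fx0 ?sqr_ge0.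
rewrite Int_D; last 4 first.
- by mt.
- by mt.
- by move=> x x0; rewrite mulr_ge0 ?expR_ge0 ?fx0.
- by move=> x x0; rewrite !mulr_ge0 ?expR_ge0 ?fx0 ?sqr_ge0.
apply: lte_mul_pinfty => //.
apply: lte_add_pinfty; [exact: A2|exact: A3].
Qed.

Lemma le_sum_norm (l : seq R) t : t \in l -> t <= \sum_(u <- l) `|u|.
Proof.
elim: l => [|a l IH]; first by rewrite in_nil.
rewrite in_cons big_cons => /orP[/eqP ->|tl].
  apply: (le_trans (ler_norm a)); rewrite lerDl.
  by apply: sumr_ge0 => i _; exact: normr_ge0.
apply: (le_trans (IH tl)); rewrite lerDr; exact: normr_ge0.
Qed.

Lemma slope th l : inTheta th -> PL l th -> mR th ->
  Fin (Int (fun x => expR (th x) * f x)) ->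
  exists X s, [/\ 0 <= X, 0 <= s, s < beta,
   (forall x, X <= x -> th x = th X + s * (x - X)) &
   (forall x, 0 <= x -> th x <= th X + s * x)].
Proof.
move=> [hmon hcvx] hpl mth hfin.
pose X := 1 + \sum_(u <- l) `|u|.
have X0 : 0 <= X.
  by rewrite /X addr_ge0 // sumr_ge0 // => i _; exact: normr_ge0.
have hX : forall t, t \in l -> t < X.
  by move=> t tl; have := le_sum_norm tl; rewrite /X; lra.
have haff : forall b, X < b -> aff X b th.
  move=> b Xb; apply: hpl => // t tl h; have := hX t tl; lra.
pose s := th (X + 1) - th X.
have hlin : forall x, X <= x -> th x = th X + s * (x - X).
  move=> x; rewrite le_eqVlt => /orP[/eqP <-|Xx]; first by rewrite subrr mulr0 addr0.
  have hb : X < x + 1 by lra.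
  rewrite /s (haff _ hb x) ?(haff _ hb (X + 1)); [|lra|lra|lra|lra].
  field; fsc.
have s0 : 0 <= s by rewrite /s subr_ge0; apply: hmon => //; lra.
have hle : forall x, 0 <= x -> th x <= th X + s * x.
  move=> x x0; case: (boolP (x <= X)) => xX; last (move: xX; rewrite -ltNge => xX).
    have := hmon x X x0 xX; have : 0 <= s * x by rewrite mulr_ge0.
    lra.
  rewrite (hlin x (ltW xX)); have : 0 <= s * X by rewrite mulr_ge0.
  rewrite mulrBr; lra.
exists X, s; split => //.
apply: A2c.
have mf' := mf.
pose c := expR (s * X - th X).
apply: (@le_lt_trans _ _ (Int (fun x => expR (s * X) * f x + c * (expR (th x) * f x)))).
  apply: Int_le; [by mt|by mt| |].
    by move=> x x0; rewrite mulr_ge0 ?expR_ge0 ?f_ge0.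
  move=> x x0.
  have -> : expR (s * X) * f x + c * (expR (th x) * f x) =
     (expR (s * X) + c * expR (th x)) * f x by ring.
  rewrite ler_wpM2r ?f_ge0 //.
  case: (boolP (x <= X)) => xX; last (move: xX; rewrite -ltNge => xX).
    apply: (@le_trans _ _ (expR (s * X))).
      by rewrite ler_expR ler_wpM2l.
    by rewrite lerDl mulr_ge0 ?expR_ge0.
  rewrite /c -expRD (hlin x (ltW xX)).
  have -> : s * X - th X + (th X + s * (x - X)) = s * x by ring.
  by rewrite lerDr expR_ge0.
rewrite Int_D; last 4 first.
- by mt.
- by mt.
- by move=> x x0; rewrite mulr_ge0 ?expR_ge0 ?f_ge0.
- by move=> x x0; rewrite !mulr_ge0 ?expR_ge0 ?f_ge0.
rewrite Int_Z; last 3 first.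
- exact: expR_ge0.
- by mt.
- by move=> x x0; rewrite f_ge0.
rewrite Int_Z; last 3 first.
- exact: expR_ge0.
- by mt.
- by move=> x x0; rewrite mulr_ge0 ?expR_ge0 ?f_ge0.
rewrite Int_f; apply: lte_add_pinfty; first by rewrite -EFinM ltry.
by apply: lte_mul_pinfty => //; rewrite lee_fin expR_ge0.
Qed.

End P3.

Section P4.
Variable R : realType.
Local Notation Rp := (@Rplus R).
Implicit Types (h g : R -> R) (xs : seq R).

Definition Avg xs g := (\sum_(x <- xs) g x) / (size xs)%:R.

Lemma LikE f xs g : Lik f xs g = ((Avg xs g)%:E - Int (fun x => (expR (g x) * f x)%R) + 1)%E.
Proof. by []. Qed.

Lemma Avg_lin xs g h (a : R) : Avg xs (fun x => g x + a * h x) = Avg xs g + a * Avg xs h.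
Proof. by rewrite /Avg big_split /= -mulr_sumr mulrDl mulrA. Qed.

Lemma Avg_cst xs (c : R) : (0 < size xs)%N -> Avg xs (fun _ => c) = c.
Proof.
move=> hs; rewrite /Avg.
have -> : \sum_(x <- xs) c = c * (size xs)%:R.
  elim: (xs) => [|a l IH]; first by rewrite big_nil mulr0.
  by rewrite big_cons IH /= -addn1 natrD mulrDr mulr1 addrC.
by rewrite mulfK // pnatr_eq0 -lt0n.
Qed.

Lemma Avg_sum xs (I : Type) (s : seq I) (F : I -> R) (G : I -> R -> R) :
  Avg xs (fun x => \sum_(i <- s) F i * G i x) = \sum_(i <- s) F i * Avg xs (G i).
Proof.
rewrite /Avg exchange_big mulr_suml; apply: eq_bigr => i _.
by rewrite -mulr_sumr mulrA.
Qed.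

Lemma Avg_ext xs g h : all (fun x => 0 <= x) xs ->
  (forall x, 0 <= x -> g x = h x) -> Avg xs g = Avg xs h.
Proof.
move=> /allP H E; rewrite /Avg; congr (_ / _).
by apply: eq_big_seq => x hx; apply: E; apply: H.
Qed.

Lemma Avg_le xs g h : all (fun x => 0 <= x) xs ->
  (forall x, 0 <= x -> g x <= h x) -> Avg xs g <= Avg xs h.
Proof.
move=> /allP H E; rewrite /Avg ler_wpM2r ?invr_ge0 ?ler0n //.
rewrite [X in X <= _]big_seq [X in _ <= X]big_seq; apply: ler_sum => x hx; apply: E; exact: H.
Qed.

Lemma exp_mulN z : expR z * expR (- z) = 1 :> R.
Proof. by rewrite -expRD subrr expR0. Qed.

Lemma exp_up (z : R) : 0 <= z -> expR z - 1 - z <= z ^+ 2 * expR z.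
Proof.
move=> z0.
have h2 := expR_ge1Dx (- z).
have h3 := exp_mulN z.
have e0 := expR_ge0 z.
have h4 : expR z * (1 + - z) <= expR z * expR (- z) by rewrite ler_wpM2l.
have h5 : expR z - 1 <= z * expR z by rewrite h3 in h4; lra.
have h6 : z * (expR z - 1) <= z * (z * expR z) by rewrite ler_wpM2l.
have -> : z ^+ 2 * expR z = z * (z * expR z) by rewrite expr2 mulrA.
lra.
Qed.

Lemma exp_down (z : R) : 0 <= z -> expR (- z) <= 1 - z + z ^+ 2.
Proof.
move=> z0.
have h1 := expR_ge1Dx z.
have h2 := expR_ge1Dx (- z).
have h3 := exp_mulN z.
have e0 := expR_ge0 (- z).
have h4 : expR (- z) * (1 + z) <= expR (- z) * expR z by rewrite ler_wpM2l.
have h5 : z * (1 + - z) <= z * expR (- z) by rewrite ler_wpM2l.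
rewrite [X in _ <= X]mulrC h3 in h4.
have -> : z ^+ 2 = z * z by rewrite expr2.
lra.
Qed.

Lemma le_1sq (x : R) : x <= 1 + x ^+ 2.
Proof. rewrite expr2; nra. Qed.

Lemma within_aff (a b : R) g : {within Rp, continuous g} ->
  {within Rp, continuous (fun x => a * g x + b)}.
Proof.
move=> hg; apply/subspace_continuousP => x Ax.
have hgx := (@subspace_continuousP _ Rp _ g).1 hg x Ax.
apply: cvgD; last exact: cvg_cst.
apply: cvgM; first exact: cvg_cst.
exact: hgx.
Qed.

End P4.

Lemma fin_EFin (R : realType) (e : \bar R) : (0 <= e)%E -> Fin e -> e = (fine e)%:E.
Proof. by case: e. Qed.

Section P5.
Variable R : realType.
Local Notation Rp := (@Rplus R).
Variables (f : R -> R) (beta : R) (xs : seq R) (th : R -> R).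
Hypothesis Hd : density_assumptions f beta.
Hypothesis hth : inTheta1 f th.
Hypothesis hthV : inV th.

Lemma bound_th : exists K s c, [/\ 0 <= K, 0 <= s < beta, 0 <= c,
 (forall x, 0 <= x -> expR (th x) <= K * expR (s * x)) &
 (forall x, 0 <= x -> th x - th 0 <= c + s * x)].
Proof.
case: hth => hT hI; case: hthV => hc [l hl].
have mth := mcont hc.
have hfin : Fin (Int (fun x => expR (th x) * f x)).
  by rewrite /Fin; have -> : Int (fun x => expR (th x) * f x) = 1%:E := hI; exact: ltry.
have [X [s [X0 s0 sb hlin hle]]] := slope Hd hT hl mth hfin.
exists (expR (th X)), s, (th X - th 0); split.
- exact: expR_ge0.
- by rewrite s0 sb.
- by rewrite subr_ge0; apply: hT.1.
- by move=> x x0; rewrite -expRD ler_expR; exact: hle.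
- by move=> x x0; have := hle x x0; lra.
Qed.

Lemma mth : mR th.
Proof. by case: hthV => hc _; exact: mcont. Qed.

Lemma hI1 : Int (fun x => expR (th x) * f x) = 1%:E.
Proof. by case: hth. Qed.

Lemma DL_V q : 0 <= q -> exists ev,
  Int (fun x => Vtau q x * expR (th x) * f x) = ev%:E /\
  DL f xs th (Vtau q) = (Avg xs (Vtau q) - ev)%:E.
Proof.
move=> q0.
have [K [s [c [K0 /andP[s0 sb] c0 hK hu]]]] := bound_th.
have mf' := mf Hd. have mth' := mth.
have fx0 := f_ge0 Hd.
pose V := Vtau q.
have mV' : mR V := mV q.
have V0 : forall x, 0 <= V x by move=> x; exact: Vtau_ge0.
have Vx : forall x, 0 <= x -> V x <= x.
  move=> x x0; rewrite /V /Vtau; rewrite ge_max x0 andbT; lra.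
pose t0 := (beta - s) / 2.
have t00 : 0 < t0 by rewrite /t0; lra.
have st0 : s + t0 < beta by rewrite /t0; lra.
have hEV : Fin (Int (fun x => V x * expR (th x) * f x)).
  apply: (fin_bound Hd (K := K) (l := s)) => //; first by mt.
  move=> x x0; rewrite mulr_ge0 ?V0 ?expR_ge0 //=.
  apply: (@le_trans _ _ (x * (K * expR (s * x)))).
    by apply: ler_pM; [exact: V0|exact: expR_ge0|exact: Vx|exact: hK].
  have := le_1sq x.
  have : 0 <= K * expR (s * x) by rewrite mulr_ge0 // expR_ge0.
  move=> h1 h2.
  have -> : K * ((1 + x ^+ 2) * expR (s * x)) = (1 + x ^+ 2) * (K * expR (s * x)) by ring.
  by rewrite ler_wpM2r.
have hEV2 : Fin (Int (fun x => V x ^+ 2 * expR (t0 * V x) * expR (th x) * f x)).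
  apply: (fin_bound Hd (K := K) (l := s + t0)) => //; first by mt; exact: mX2.
  move=> x x0; rewrite !mulr_ge0 ?sqr_ge0 ?expR_ge0 //=.
  apply: (@le_trans _ _ (x ^+ 2 * expR (t0 * x) * (K * expR (s * x)))).
    apply: ler_pM.
    - by rewrite mulr_ge0 ?sqr_ge0 ?expR_ge0.
    - exact: expR_ge0.
    - apply: ler_pM.
      + exact: sqr_ge0.
      + exact: expR_ge0.
      + by rewrite !expr2; apply: ler_pM; [exact: V0|exact: V0|exact: Vx|exact: Vx].
      + by rewrite ler_expR ler_wpM2l ?Vx // ltW.
    - exact: hK.
  have := le_1sq x.
  have : 0 <= K * expR ((s + t0) * x) by rewrite mulr_ge0 // expR_ge0.
  move=> h1 h2.
  have -> : x ^+ 2 * expR (t0 * x) * (K * expR (s * x)) = x ^+ 2 * (K * expR ((s + t0) * x)).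
    by rewrite mulrDl addrC expRD; ring.
  have -> : K * ((1 + x ^+ 2) * expR ((s + t0) * x)) = (1 + x ^+ 2) * (K * expR ((s + t0) * x)) by ring.
  by rewrite ler_wpM2r // lerDr.
pose ev := fine (Int (fun x => V x * expR (th x) * f x)).
pose ev2 := fine (Int (fun x => V x ^+ 2 * expR (t0 * V x) * expR (th x) * f x)).
have Eev : Int (fun x => V x * expR (th x) * f x) = ev%:E.
  apply: fin_EFin => //; apply: Int_ge0 => x x0; rewrite !mulr_ge0 ?expR_ge0 ?fx0 //.
have Eev2 : Int (fun x => V x ^+ 2 * expR (t0 * V x) * expR (th x) * f x) = ev2%:E.
  apply: fin_EFin => //; apply: Int_ge0 => x x0; rewrite !mulr_ge0 ?sqr_ge0 ?expR_ge0 ?fx0 //.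
have ev20 : 0 <= ev2.
  have : (0 <= ev2%:E)%E.
    by rewrite -Eev2; apply: Int_ge0 => x x0; rewrite !mulr_ge0 ?sqr_ge0 ?expR_ge0 ?fx0.
  by rewrite lee_fin.
have Hint : forall t, 0 < t -> t <= t0 -> exists rho, 0 <= rho <= t ^+ 2 * ev2 /\
    Int (fun x => expR (th x + t * V x) * f x) = (1 + t * ev + rho)%:E.
  move=> t tp tt0.
  pose r x := (expR (th x + t * V x) - expR (th x) * (1 + t * V x)) * f x.
  have mr : mR r by rewrite /r; mt.
  have r0 : forall x, 0 <= x -> 0 <= r x.
    move=> x x0; rewrite /r mulr_ge0 ?fx0 // subr_ge0 expRD ler_wpM2l ?expR_ge0 //.
    exact: expR_ge1Dx.
  have rle : forall x, 0 <= x -> r x <= t ^+ 2 * (V x ^+ 2 * expR (t0 * V x) * expR (th x) * f x).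
    move=> x x0.
    have E1 : r x = (expR (th x) * f x) * (expR (t * V x) - 1 - t * V x) by rewrite /r expRD; ring.
    have E2 : t ^+ 2 * (V x ^+ 2 * expR (t0 * V x) * expR (th x) * f x) =
       (expR (th x) * f x) * ((t * V x) ^+ 2 * expR (t0 * V x)) by ring.
    rewrite E1 E2; apply: ler_wpM2l; first by rewrite mulr_ge0 ?expR_ge0 ?fx0.
    apply: (le_trans (exp_up _)); first by rewrite mulr_ge0 // ltW.
    apply: ler_wpM2l; first exact: sqr_ge0.
    by rewrite ler_expR ler_wpM2r.
  have hr : (Int r <= (t ^+ 2)%:E * ev2%:E)%E.
    rewrite -Eev2 -Int_Z; last 3 first.
    - exact: sqr_ge0.
    - by mt; exact: mX2.
    - by move=> x x0; rewrite !mulr_ge0 ?sqr_ge0 ?expR_ge0 ?fx0.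
    apply: Int_le => //; first by mt; exact: mX2.
  have r0' : (0 <= Int r)%E by apply: Int_ge0.
  have Er : Int r = (fine (Int r))%:E.
    apply: fin_EFin => //; rewrite /Fin; apply: (le_lt_trans hr).
    by rewrite -EFinM ltry.
  exists (fine (Int r)); split.
    apply/andP; split; first by rewrite -lee_fin -Er.
    by rewrite -lee_fin -Er EFinM.
  rewrite (_ : Int (fun x => expR (th x + t * V x) * f x) =
     Int (fun x => (expR (th x) * f x + t * (V x * expR (th x) * f x)) + r x)); last first.
    by apply: Int_ext => x _; rewrite /r; ring.
  rewrite Int_D; last 4 first.
  - by mt.
  - exact: mr.
  - by move=> x x0; rewrite addr_ge0 ?mulr_ge0 ?expR_ge0 ?fx0 // ltW.
  - exact: r0.
  rewrite Int_D; last 4 first.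
  - by mt.
  - by mt.
  - by move=> x x0; rewrite mulr_ge0 ?expR_ge0 ?fx0.
  - by move=> x x0; rewrite !mulr_ge0 ?expR_ge0 ?fx0 // ltW.
  rewrite Int_Z; last 3 first.
  - exact: ltW.
  - by mt.
  - by move=> x x0; rewrite !mulr_ge0 ?expR_ge0 ?fx0.
  by rewrite hI1 Eev Er.
pose G := fun t : R => ((Lik f xs (fun x => (th x + t * V x)%R) - Lik f xs th) * (t^-1)%:E)%E.
have key : forall t, 0 < t -> t <= t0 -> exists rho, 0 <= rho <= t ^+ 2 * ev2 /\
    G t = (Avg xs V - ev - rho / t)%:E.
  move=> t tp tt0; have [rho [hrho hI]] := Hint t tp tt0.
  exists rho; split => //.
  rewrite /G !LikE Avg_lin hI hI1.
  have -> : (((Avg xs th + t * Avg xs V)%:E - (1 + t * ev + rho)%:E + 1 -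
        ((Avg xs th)%:E - 1%:E + 1)) * (t^-1)%:E)%E =
     (((Avg xs th + t * Avg xs V) - (1 + t * ev + rho) + 1 - (Avg xs th - 1 + 1)) * t^-1)%:E.
    by [].
  congr (_%:E); field; exact: lt0r_neq0.
have hG : G @ (0:R)^'+ --> (Avg xs V - ev)%:E.
  apply/fine_cvgP; split.
    near=> t.
    have tp : 0 < t by near: t; exact: nbhs_right_gt.
    have tt0 : t <= t0 by near: t; exact: nbhs_right_le.
    by have [rho [_ ->]] := key t tp tt0.
  apply/cvgrPdist_lt => e e0.
  near=> t.
  have tp : 0 < t by near: t; exact: nbhs_right_gt.
  have tt0 : t <= t0 by near: t; exact: nbhs_right_le.
  have te : t < e / (ev2 + 1).
    near: t; apply: nbhs_right_lt; rewrite divr_gt0 //; lra.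
  have te' : t * (ev2 + 1) < e by rewrite -ltr_pdivlMr //; lra.
  have [rho [/andP[r0 r1] E]] := key t tp tt0.
  rewrite /= E /=.
  have -> : Avg xs V - ev - (Avg xs V - ev - rho / t) = rho / t by ring.
  rewrite ger0_norm; last by rewrite divr_ge0 // ltW.
  have h1 : rho / t <= t * ev2.
    rewrite ler_pdivrMr //; move: r1; rewrite expr2; lra.
  lra.
exists ev; split => //.
rewrite /DL.
exact: (cvg_lim _ hG).
Unshelve. all: end_near. Qed.

End P5.

Section P6.
Variable R : realType.
Local Notation Rp := (@Rplus R).
Variables (f : R -> R) (beta : R) (xs : seq R) (th : R -> R).
Hypothesis Hd : density_assumptions f beta.
Hypothesis hth : inTheta1 f th.
Hypothesis hthV : inV th.

Lemma loc_opt : locally_optimal f xs th -> exists Eu,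
  Int (fun x => (th x - th 0) * expR (th x) * f x) = Eu%:E /\
  Eu <= Avg xs (fun x => th x - th 0).
Proof.
move=> [hT [_ hopt]].
have [K [s [c [K0 /andP[s0 sb] c0 hK hu]]]] := bound_th Hd hth hthV.
have hI := hI1 hth.
have mth' := mth hthV.
case: hthV => hc [l hl].
have mf' := mf Hd.
have fx0 := f_ge0 Hd.
pose u x := th x - th 0.
have mu' : mR u by rewrite /u; mt.
have u0 : forall x, 0 <= x -> 0 <= u x.
  by move=> x x0; rewrite /u subr_ge0; apply: hT.1.
have hEu : Fin (Int (fun x => u x * expR (th x) * f x)).
  apply: (fin_bound Hd (K := K * (c + s)) (l := s)) => //.
  - by mt.
  - by rewrite mulr_ge0 // addr_ge0.
  move=> x x0; rewrite mulr_ge0 ?u0 ?expR_ge0 //=.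
  apply: (@le_trans _ _ ((c + s * x) * (K * expR (s * x)))).
    by apply: ler_pM; [exact: u0|exact: expR_ge0|exact: hu|exact: hK].
  have h1 := le_1sq x.
  have h2 : 0 <= K * expR (s * x) by rewrite mulr_ge0 // expR_ge0.
  have h3 : c + s * x <= (c + s) * (1 + x ^+ 2).
    have : 0 <= c * x ^+ 2 by rewrite mulr_ge0 // sqr_ge0.
    have : s * x <= s * (1 + x ^+ 2) by rewrite ler_wpM2l.
    lra.
  have -> : K * (c + s) * ((1 + x ^+ 2) * expR (s * x)) =
    ((c + s) * (1 + x ^+ 2)) * (K * expR (s * x)) by ring.
  by rewrite ler_wpM2r.
have hEu2 : Fin (Int (fun x => u x ^+ 2 * expR (th x) * f x)).
  apply: (fin_bound Hd (K := K * (2 * (c ^+ 2 + s ^+ 2))) (l := s)) => //.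
  - by mt; exact: mX2.
  - by rewrite !mulr_ge0 // addr_ge0 // sqr_ge0.
  move=> x x0; rewrite mulr_ge0 ?sqr_ge0 ?expR_ge0 //=.
  apply: (@le_trans _ _ ((c + s * x) ^+ 2 * (K * expR (s * x)))).
    apply: ler_pM; [exact: sqr_ge0|exact: expR_ge0| |exact: hK].
    by rewrite !expr2; apply: ler_pM; [exact: u0|exact: u0|exact: hu|exact: hu].
  have h1 := le_1sq x.
  have h2 : 0 <= K * expR (s * x) by rewrite mulr_ge0 // expR_ge0.
  have h3 : (c + s * x) ^+ 2 <= (2 * (c ^+ 2 + s ^+ 2)) * (1 + x ^+ 2).
    have : 0 <= (c - s * x) ^+ 2 by exact: sqr_ge0.
    have : 0 <= c ^+ 2 * x ^+ 2 by rewrite mulr_ge0 // sqr_ge0.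
    have : 0 <= s ^+ 2 by exact: sqr_ge0.
    rewrite !expr2; nra.
  have -> : K * (2 * (c ^+ 2 + s ^+ 2)) * ((1 + x ^+ 2) * expR (s * x)) =
    ((2 * (c ^+ 2 + s ^+ 2)) * (1 + x ^+ 2)) * (K * expR (s * x)) by ring.
  by rewrite ler_wpM2r.
pose Eu := fine (Int (fun x => u x * expR (th x) * f x)).
pose Eu2 := fine (Int (fun x => u x ^+ 2 * expR (th x) * f x)).
have EEu : Int (fun x => u x * expR (th x) * f x) = Eu%:E.
  apply: fin_EFin => //; apply: Int_ge0 => x x0; rewrite !mulr_ge0 ?u0 ?expR_ge0 ?fx0 //.
have EEu2 : Int (fun x => u x ^+ 2 * expR (th x) * f x) = Eu2%:E.
  apply: fin_EFin => //; apply: Int_ge0 => x x0; rewrite !mulr_ge0 ?sqr_ge0 ?expR_ge0 ?fx0 ?u0 //.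
have Eu20 : 0 <= Eu2.
  have : (0 <= Eu2%:E)%E.
    by rewrite -EEu2; apply: Int_ge0 => x x0; rewrite !mulr_ge0 ?sqr_ge0 ?expR_ge0 ?fx0 ?u0.
  by rewrite lee_fin.
have main : forall t, 0 < t -> t < 1 -> Eu - Avg xs u <= t * Eu2.
  move=> t tp t1.
  pose w x := th x + (- t) * u x.
  have hwT : inTheta w.
    split.
      move=> x y x0 xy; rewrite /w /u.
      have := hT.1 x y x0 xy => h.
      have : 0 <= (1 - t) * (th y - th x) by rewrite mulr_ge0 //; lra.
      lra.
    move=> x y la x0 y0 l0 l1; rewrite /w /u.
    have H := hT.2 x y la x0 y0 l0 l1.
    have H' : (1 - t) * th (la * x + (1 - la) * y) <= (1 - t) * (la * th x + (1 - la) * th y).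
      by rewrite ler_wpM2l //; lra.
    lra.
  have hwV : inVS (Dbr th) w.
    split; first split.
    - have -> : w = (fun x => (1 - t) * th x + t * th 0).
        by apply/funext => x; rewrite /w /u; ring.
      exact: within_aff.
    - exists l => a b a0 ab hlt x ax xb.
      rewrite /w /u (hl a b a0 ab hlt x ax xb); ring.
    move=> tau [tau0 hne]; split => //.
    have [d [d0 dt H]] := loc_delta l tau0.
    have [hr hl'] := PL_loc hl tau0 d0 dt H.
    have hwr : aff tau (tau + d) w.
      by move=> y h1 h2; rewrite /w /u (hr y h1 h2); ring.
    move: hne; rewrite (rderiv_aff d0 hwr) (rderiv_aff d0 hr).
    have -> : (w (tau + d) - w tau) / d = (1 - t) * ((th (tau + d) - th tau) / d).
      by rewrite /w /u; field; fsc.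
    case: (eqVneq tau 0) => [te|tn].
      rewrite te !lderiv0; apply: contra_neq => <-; by rewrite mulr0.
    have tp' : 0 < tau by rewrite lt_def tn.
    have hwl : aff (tau - d) tau w.
      by move=> y h1 h2; rewrite /w /u (hl' tp' y h1 h2); ring.
    rewrite (lderiv_aff tn d0 hwl) (lderiv_aff tn d0 (hl' tp')).
    have -> : (w tau - w (tau - d)) / d = (1 - t) * ((th tau - th (tau - d)) / d).
      by rewrite /w /u; field; fsc.
    by apply: contra_neq => ->.
  have hLik := hopt w hwT hwV.
  have mw : mR w by rewrite /w; mt.
  have ew : forall x, 0 <= x -> expR (w x) = expR (th x) * expR (- (t * u x)).
    by move=> x x0; rewrite /w mulNr -expRD.
  have hom : (Int (fun x => (expR (w x) * f x)%R) <= 1%:E)%E.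
    rewrite -hI; apply: Int_le; [by mt|by mt| |].
      by move=> x x0; rewrite mulr_ge0 ?expR_ge0 ?fx0.
    move=> x x0; rewrite ler_wpM2r ?fx0 // ler_expR /w.
    have := u0 x x0; have : 0 <= t * u x by rewrite mulr_ge0 ?u0 // ltW.
    lra.
  have Eom : Int (fun x => expR (w x) * f x) = (fine (Int (fun x => expR (w x) * f x)))%:E.
    apply: fin_EFin; first by apply: Int_ge0 => x x0; rewrite mulr_ge0 ?expR_ge0 ?fx0.
    by rewrite /Fin; apply: (le_lt_trans hom); exact: ltry.
  set om := fine (Int (fun x => expR (w x) * f x)) in Eom.
  have Hpt : (Int (fun x => (expR (w x) * f x + t * (u x * expR (th x) * f x))%R) <=
              Int (fun x => (expR (th x) * f x + t ^+ 2 * (u x ^+ 2 * expR (th x) * f x))%R))%E.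
    apply: Int_le; [by mt|by mt; exact: mX2| |].
      by move=> x x0; rewrite addr_ge0 ?mulr_ge0 ?expR_ge0 ?fx0 ?u0 // ltW.
    move=> x x0; rewrite ew //.
    have ef : 0 <= expR (th x) * f x by rewrite mulr_ge0 ?expR_ge0 ?fx0.
    have H := ler_wpM2l ef (exp_down (_ : 0 <= t * u x)).
    have H' := H (mulr_ge0 (ltW tp) (u0 x x0)).
    rewrite expr2 in H'; rewrite expr2; lra.
  rewrite Int_D in Hpt; last 4 first.
  - by mt.
  - by mt.
  - by move=> x x0; rewrite mulr_ge0 ?expR_ge0 ?fx0.
  - by move=> x x0; rewrite !mulr_ge0 ?expR_ge0 ?fx0 ?u0 // ltW.
  rewrite Int_D in Hpt; last 4 first.
  - by mt.
  - by mt; exact: mX2.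
  - by move=> x x0; rewrite mulr_ge0 ?expR_ge0 ?fx0.
  - by move=> x x0; rewrite !mulr_ge0 ?sqr_ge0 ?expR_ge0 ?fx0 ?u0 // ltW.
  rewrite Int_Z in Hpt; last 3 first.
  - exact: ltW.
  - by mt.
  - by move=> x x0; rewrite !mulr_ge0 ?expR_ge0 ?fx0 ?u0.
  rewrite Int_Z in Hpt; last 3 first.
  - exact: sqr_ge0.
  - by mt; exact: mX2.
  - by move=> x x0; rewrite !mulr_ge0 ?sqr_ge0 ?expR_ge0 ?fx0 ?u0.
  rewrite Eom EEu hI EEu2 in Hpt.
  have Hpt' : om + t * Eu <= 1 + t ^+ 2 * Eu2 by rewrite -lee_fin.
  rewrite !LikE Avg_lin Eom hI in hLik.
  have hL : Avg xs th + - t * Avg xs u - om + 1 <= Avg xs th - 1 + 1.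
    by rewrite -lee_fin.
  have : t * (Eu - Avg xs u) <= t * (t * Eu2).
    rewrite expr2 in Hpt'; lra.
  by rewrite ler_pM2l.
exists Eu; split => //.
apply/ler_addgt0Pr => e e0.
pose t := Num.min (1 / 2) (e / (Eu2 + 1)).
have tp : 0 < t.
  rewrite /t lt_min; apply/andP; split; [lra| apply: divr_gt0; lra].
have t1 : t < 1.
  have : t <= 1 / 2 by rewrite /t ge_min lexx.
  lra.
have te : t <= e / (Eu2 + 1) by rewrite /t ge_min lexx orbT.
have te' : t * (Eu2 + 1) <= e by rewrite -ler_pdivlMr //; lra.
have := main t tp t1.
lra.
Qed.

End P6.

Section P7.
Variable R : realType.
Local Notation Rp := (@Rplus R).

Lemma J_ge0 (v : R -> R) l q : inTheta v -> PL l v -> 0 <= q -> 0 <= J v q.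
Proof.
move=> [hmon hcvx] hv q0.
have [d [d0 dq H]] := loc_delta l q0.
have [hr hl'] := PL_loc hv q0 d0 dq H.
rewrite /J (rderiv_aff d0 hr).
case: (eqVneq q 0) => [qe|qn].
  rewrite qe lderiv0 subr0 divr_ge0 ?subr_ge0 ?(ltW d0) //.
  apply: hmon; lra.
have qp : 0 < q by rewrite lt_def qn.
rewrite (lderiv_aff qn d0 (hl' qp)) subr_ge0 ler_pM2r ?invr_gt0 //.
have := hcvx (q - d) (q + d) (1 / 2).
rewrite (_ : 1 / 2 * (q - d) + (1 - 1 / 2) * (q + d) = q); last by field.
have dq' := dq qp.
move=> /(_ _ _ _ _) h; have := h (_ : 0 <= q - d) (_ : 0 <= q + d) (_ : 0 <= 1 / 2) (_ : 1 / 2 <= 1).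
move=> /(_ _ _ _ _) => h'.
have {h'} h' := h' ltac:(lra) ltac:(lra) ltac:(lra) ltac:(lra).
lra.
Qed.


Lemma mSum (I : Type) (s : seq I) (F : I -> R -> R) :
  (forall i, mR (F i)) -> mR (fun x => \sum_(i <- s) F i x).
Proof.
move=> mF; elim: s => [|a s IH].
  have -> : (fun x => \sum_(i <- [::]) F i x) = (fun _ => 0).
    by apply/funext => x; rewrite big_nil.
  exact: mC.
have -> : (fun x => \sum_(i <- a :: s) F i x) = (fun x => F a x + \sum_(i <- s) F i x).
  by apply/funext => x; rewrite big_cons.
exact: mD.
Qed.

Lemma G4 (f : R -> R) (beta : R) (th thhat : R -> R) (Q : seq R) (cJ : R -> R) (Eu : R) :
  density_assumptions f beta -> inTheta1 f th -> inV th -> inTheta1 f thhat -> inV thhat ->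
  (forall q, q \in Q -> 0 <= q) -> (forall q, q \in Q -> 0 <= cJ q) ->
  (forall x, 0 <= x -> thhat x = thhat 0 + \sum_(q <- Q) cJ q * Vtau q x) ->
  Int (fun x => (th x - th 0) * expR (th x) * f x) = Eu%:E ->
  thhat 0 - th 0 + \sum_(q <- Q) cJ q * fine (Int (fun x => Vtau q x * expR (th x) * f x)) <= Eu.
Proof.
move=> Hd hth hthV hhat hhatV Q0 cJ0 dec EEu.
have mf' := mf Hd. have fx0 := f_ge0 Hd.
have mth' := mth hthV. have mhat := mth hhatV.
have hI := hI1 hth. have hIh := hI1 hhat.
have hmon := hth.1.1.
pose ev q := fine (Int (fun x => Vtau q x * expR (th x) * f x)).
have Eev : forall q, q \in Q -> Int (fun x => Vtau q x * expR (th x) * f x) = (ev q)%:E.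
  move=> q hq; have [e [E _]] := @DL_V R f beta [::] th Hd hth hthV q (Q0 q hq).
  by rewrite /ev E.
pose m := 1 + thhat 0 - th 0.
pose mp := Num.max m 0.
pose mn := Num.max (- m) 0.
have hm : m = mp - mn.
  rewrite /mp /mn; case: (boolP (0 <= m)) => h.
    by rewrite max_l // max_r ?subr0 //; lra.
  move: h; rewrite -ltNge => h.
  by rewrite max_r ?max_l; lra.
have mp0 : 0 <= mp by rewrite /mp le_max lexx orbT.
have mn0 : 0 <= mn by rewrite /mn le_max lexx orbT.
pose F q x := if q \in Q then cJ q * (Vtau q x * expR (th x) * f x) else 0.
have mF : forall q, mR (F q) by move=> q; rewrite /F; case: (q \in Q); mt.
have F0 : forall q x, 0 <= x -> 0 <= F q x.
  move=> q x x0; rewrite /F; case: ifP => hq //.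
  by rewrite !mulr_ge0 ?cJ0 ?Vtau_ge0 ?expR_ge0 ?fx0.
have u0 : forall x, 0 <= x -> 0 <= th x - th 0 by move=> x x0; rewrite subr_ge0 hmon.
have Hle : (Int (fun x => (mp * (expR (th x) * f x) + \sum_(q <- Q) F q x)%R) <=
   Int (fun x => (expR (thhat x) * f x + mn * (expR (th x) * f x) +
                  (th x - th 0) * expR (th x) * f x)%R))%E.
  apply: Int_le.
  - by apply: mD; [mt|exact: mSum].
  - by mt.
  - by move=> x x0; rewrite addr_ge0 ?mulr_ge0 ?expR_ge0 ?fx0 // sumr_ge0 // => q _; apply: F0.
  move=> x x0.
  have ef : 0 <= expR (th x) * f x by rewrite mulr_ge0 ?expR_ge0 ?fx0.
  have e1 : expR (th x) * f x * (1 + (thhat x - th x)) <= expR (thhat x) * f x.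
    have E : expR (thhat x) = expR (thhat x - th x) * expR (th x) by rewrite -expRD subrK.
    rewrite E.
    have -> : expR (thhat x - th x) * expR (th x) * f x =
      expR (th x) * f x * expR (thhat x - th x) by ring.
    by rewrite ler_wpM2l // expR_ge1Dx.
  have hS : \sum_(q <- Q) F q x = (\sum_(q <- Q) cJ q * Vtau q x) * (expR (th x) * f x).
    rewrite mulr_suml; apply: eq_big_seq => q hq; rewrite /F hq; ring.
  rewrite hS; rewrite {1}(dec x x0) in e1.
  move: e1; set S := \sum_(q <- Q) cJ q * Vtau q x.
  have : m = mp - mn := hm. rewrite /m => hm'.
  move=> e1.
  have -> : (th x - th 0) * expR (th x) * f x = (th x - th 0) * (expR (th x) * f x) by ring.
  have e2 : expR (th x) * f x * (1 + (thhat 0 + S - th x)) =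
     expR (th x) * f x * (mp - mn) + S * (expR (th x) * f x) - (th x - th 0) * (expR (th x) * f x).
    rewrite -hm'; ring.
  rewrite e2 in e1; lra.
rewrite Int_D in Hle; last 4 first.
- by mt.
- exact: mSum.
- by move=> x x0; rewrite mulr_ge0 ?mulr_ge0 ?expR_ge0 ?fx0.
- by move=> x x0; rewrite sumr_ge0 // => q _; apply: F0.
rewrite Int_Z in Hle; last 3 first.
- exact: mp0.
- by mt.
- by move=> x x0; rewrite mulr_ge0 ?expR_ge0 ?fx0.
rewrite Int_sum in Hle; last 2 first.
- exact: mF.
- exact: F0.
have ES : (\sum_(q <- Q) Int (F q) = (\sum_(q <- Q) cJ q * ev q)%:E)%E.
  rewrite -sumEFin; apply: eq_big_seq => q hq.
  rewrite /F hq.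
  have -> : Int (fun x => cJ q * (Vtau q x * expR (th x) * f x)) =
     ((cJ q)%:E * Int (fun x => (Vtau q x * expR (th x) * f x)%R))%E.
    apply: Int_Z; [exact: cJ0|by mt|].
    by move=> x x0; rewrite !mulr_ge0 ?Vtau_ge0 ?expR_ge0 ?fx0.
  by rewrite Eev.
rewrite ES hI in Hle.
rewrite Int_D in Hle; last 4 first.
- by mt.
- by mt.
- by move=> x x0; rewrite addr_ge0 ?mulr_ge0 ?expR_ge0 ?fx0.
- by move=> x x0; rewrite !mulr_ge0 ?expR_ge0 ?fx0 ?u0.
rewrite Int_D in Hle; last 4 first.
- by mt.
- by mt.
- by move=> x x0; rewrite mulr_ge0 ?expR_ge0 ?fx0.
- by move=> x x0; rewrite !mulr_ge0 ?expR_ge0 ?fx0.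
rewrite Int_Z in Hle; last 3 first.
- exact: mn0.
- by mt.
- by move=> x x0; rewrite mulr_ge0 ?expR_ge0 ?fx0.
rewrite hIh hI EEu in Hle.
have H : mp * 1 + \sum_(q <- Q) cJ q * ev q <= 1 + mn * 1 + Eu.
  by rewrite -lee_fin.
have : m = mp - mn := hm.
rewrite /m; lra.
Qed.

End P7.

Unset Implicit Arguments.

Theorem mainTheorem3 (R : realType) (f : R -> R) (beta : R) (xs : seq R)
    (thhat th : R -> R) (eps : R) :
  density_assumptions f beta ->
  (0 < size xs)%N -> sorted <=%R xs -> all (fun x => 0 <= x) xs ->
  (* thhat is the maximizer of L over Theta *)
  inTheta thhat -> (forall v, inTheta v -> (Lik f xs v <= Lik f xs thhat)%E) ->
  (* known facts about thhat (Duembgen) *)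
  inTheta1 f thhat -> inV thhat ->
  Dbr thhat `<=` ([set 0] `|` `[head 0 xs, last 0 xs]) `\` [set x | x \in xs] ->
  0 < eps ->
  inTheta1 f th -> inV th -> locally_optimal f xs th ->
  (ereal_sup [set DL f xs th (Vtau tau) | tau in @Rplus R] < eps%:E)%E ->
  (Lik f xs thhat - Lik f xs th <= (rderiv thhat (last 0 xs) * eps)%R%:E)%E /\
  rderiv thhat (last 0 xs) * eps < beta * eps.
Proof.
move=> Hd hsz hsort hxs0 hThat hopt hhat hhatV hDbr eps0 hth hthV hlo hsup.
have hhatV' := hhatV.
case: hhatV' => hchat [lh hlh].
set Q' := [seq t <- undup lh | 0 < t].
have uQ : uniq Q' by rewrite filter_uniq // undup_uniq.
have aQ : all (fun t => 0 < t) Q' by apply: filter_all.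
have hPL : PL Q' thhat := PL_filter hlh.
have dec := decomp uQ aQ hPL.
have Q0 : forall q, q \in 0 :: Q' -> 0 <= q.
  move=> q; rewrite in_cons => /orP[/eqP ->//|hq]; exact: ltW (allP aQ q hq).
have Jge0 : forall q, q \in 0 :: Q' -> 0 <= J thhat q.
  by move=> q hq; exact: (J_ge0 hThat hPL (Q0 q hq)).
have xn0 : 0 <= last 0 xs.
  have := mem_last 0 xs; rewrite in_cons => /orP[/eqP -> //| hx].
  exact: (allP hxs0).
have Jz : forall q, q \in 0 :: Q' -> last 0 xs < q -> J thhat q = 0.
  move=> q hq hlt.
  case: (eqVneq (lderiv thhat q) (rderiv thhat q)) => [e|ne]; first by rewrite /J e subrr.
  have q0 : 0 <= q by lra.
  have := hDbr q (conj q0 ne).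
  case=> [[qe|hi] _].
    by move: hlt; rewrite qe; lra.
  by move: hi; rewrite /= in_itv /= => /andP[_ qb]; lra.
have hS : rderiv thhat (last 0 xs) = \sum_(q <- 0 :: Q') J thhat q.
  rewrite (rderiv_sum uQ aQ hPL xn0) [LHS]big_mkcond /=; apply: eq_big_seq => q hq.
  case: ifP => // /negbT; rewrite -ltNge => h; by rewrite Jz.
have mhat := mth hhatV.
have hfin : Fin (Int (fun x => expR (thhat x) * f x)).
  by rewrite /Fin (hI1 hhat); exact: ltry.
have [X [s [X0 s0 sb hlin _]]] := slope Hd hThat hPL mhat hfin.
pose x' := X + last 0 xs + \sum_(q <- Q') `|q|.
have sn0 : 0 <= \sum_(q <- Q') `|q| by apply: sumr_ge0 => i _; exact: normr_ge0.
have hx'X : X <= x' by rewrite /x'; lra.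
have hqx' : forall q, q \in 0 :: Q' -> q <= x'.
  move=> q; rewrite in_cons => /orP[/eqP ->|hq]; first by rewrite /x'; lra.
  have := le_sum_norm hq; rewrite /x'; lra.
have Eslope : rderiv thhat x' = s.
  apply: (@rderiv_loc _ thhat x' 1 s) => // h h0 h1.
  rewrite (hlin (x' + h)) ?(hlin x') //; last lra.
  ring.
have hS2 : rderiv thhat x' = \sum_(q <- 0 :: Q') J thhat q.
  rewrite (rderiv_sum uQ aQ hPL (_ : 0 <= x')); last lra.
  rewrite [LHS]big_mkcond; apply: eq_big_seq => q hq; by rewrite (hqx' q hq).
have Sb : rderiv thhat (last 0 xs) < beta by rewrite hS -hS2 Eslope.
split; last by rewrite ltr_pM2r.
have [Eu [EEu hEu]] := loc_opt Hd hth hthV hlo.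
have hG4 := G4 Hd hth hthV hhat hhatV Q0 Jge0 dec EEu.
have hq_eps : forall q, q \in 0 :: Q' ->
    Avg xs (Vtau q) - fine (Int (fun x => Vtau q x * expR (th x) * f x)) < eps.
  move=> q hq; have [e [E1 E2]] := @DL_V R f beta xs th Hd hth hthV q (Q0 q hq).
  have hle : (DL f xs th (Vtau q) <= ereal_sup [set DL f xs th (Vtau tau) | tau in @Rplus R])%E.
    by apply: ereal_sup_ubound; exists q => //; rewrite RpE Q0.
  by have := le_lt_trans hle hsup; rewrite E2 lte_fin E1.
have AvgHat : Avg xs thhat = thhat 0 + \sum_(q <- 0 :: Q') J thhat q * Avg xs (Vtau q).
  rewrite (@Avg_ext _ xs thhat (fun x => (fun _ => thhat 0) x + 1 * (fun x => \sum_(q <- 0 :: Q') J thhat q * Vtau q x) x)) //; last first.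
    by move=> x x0; rewrite mul1r dec.
  by rewrite Avg_lin Avg_cst // mul1r Avg_sum.
have AvgTh : Avg xs th = th 0 + Avg xs (fun x => th x - th 0).
  rewrite (@Avg_ext _ xs th (fun x => (fun _ => th 0) x + 1 * (fun x => th x - th 0) x)) //; last first.
    by move=> x _; ring.
  by rewrite Avg_lin Avg_cst // mul1r.
have hsum : \sum_(q <- 0 :: Q') J thhat q * Avg xs (Vtau q) <=
    \sum_(q <- 0 :: Q') J thhat q * fine (Int (fun x => Vtau q x * expR (th x) * f x))
    + eps * \sum_(q <- 0 :: Q') J thhat q.
  rewrite mulr_sumr -big_split /= [X in X <= _]big_seq [X in _ <= X]big_seq.
  apply: ler_sum => q hq.
  have h := hq_eps q hq.
  have -> : J thhat q * fine (Int (fun x => Vtau q x * expR (th x) * f x)) + eps * J thhat q =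
    J thhat q * (fine (Int (fun x => Vtau q x * expR (th x) * f x)) + eps) by ring.
  rewrite ler_wpM2l ?Jge0 //; lra.
rewrite !LikE (hI1 hhat) (hI1 hth).
have -> : ((Avg xs thhat)%:E - 1%:E + 1 - ((Avg xs th)%:E - 1%:E + 1))%E =
   (Avg xs thhat - 1 + 1 - (Avg xs th - 1 + 1))%:E by [].
rewrite lee_fin AvgHat AvgTh hS.
lra.
Qed.
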